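(* Let $0<c<2$ and let $r:\tilde Q\to\mathbb R$ satisfy equation (E-III) at every label $(K,L,-K-1)$ with $K\ge0$, $0\le L\le K$, and at every label $(K,L,-L-1)$ with $L\ge0$, $0\le K\le L$ (all radius sums in denominators being nonzero). If $r(n,0,-n)>0$ and $r(0,n,-n)>0$ for all integers $n\ge0$, then $r(K,L,-K)>0$ for all $0\le L\le K$ and $r(K,L,-L)>0$ for all $0\le K\le L$.
   Context: $\tilde Q=\{(K,L,M)\in\mathbb Z^3: L+M\le0,\ K+M\le0,\ K+L\ge0\}$. Equation (E-III) at a label $(K,L,M)$: setting $r_1=r(K+1,L,M)$, $r_2=r(K+1,L+1,M)$, $r_3=r(K,L+1,M)$, $r_4=r(K,L+1,M+1)$, $r_5=r(K,L,M+1)$, $r_6=r(K+1,L,M+1)$, $$(L+M+1)\frac{r_4-r_1}{r_4+r_1}+(M+K+1)\frac{r_6-r_3}{r_6+r_3}+(K+L+1)\frac{r_2-r_5}{r_2+r_5}=c-1,$$ where a term whose coefficient vanishes is omitted (so radii with vanishing coefficient need not be defined). *)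

(* Defs.v *)
From Stdlib Require Import Reals ZArith.
Open Scope R_scope.

(* Radius function: labels are integer triples (K,L,M). Values outside the
   region Q~ are never used by the statement. *)
Definition radius := Z -> Z -> Z -> R.

Definition inQ (K L M : Z) : Prop :=
  (L + M <= 0)%Z /\ (K + M <= 0)%Z /\ (0 <= K + L)%Z.

Definition eterm (coef : Z) (a b : R) : R :=
  if Z.eq_dec coef 0 then 0 else IZR coef * ((a - b) / (a + b)).

Definition eden (coef : Z) (a b : R) : Prop :=
  coef <> 0%Z -> a + b <> 0.

Definition EIII (c : R) (r : radius) (K L M : Z) : Prop :=
  let r1 := r (K + 1)%Z L M in
  let r2 := r (K + 1)%Z (L + 1)%Z M in
  let r3 := r K (L + 1)%Z M in
  let r4 := r K (L + 1)%Z (M + 1)%Z in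
  let r5 := r K L (M + 1)%Z in
  let r6 := r (K + 1)%Z L (M + 1)%Z in
  eden (L + M + 1) r4 r1 /\ eden (M + K + 1) r6 r3 /\ eden (K + L + 1) r2 r5 /\
  eterm (L + M + 1) r4 r1 + eterm (M + K + 1) r6 r3 + eterm (K + L + 1) r2 r5
    = c - 1.

(* Main.v *)
Require Import Defs.
From Stdlib Require Import Reals ZArith Lra Lia Psatz.
Open Scope R_scope.

Lemma step (c u v a2 a5 : R) (k l : Z) :
  0 < c -> c < 2 -> (0 <= l <= k)%Z -> (k = l \/ (0 < u /\ 0 < v)) ->
  0 < a5 -> a2 + a5 <> 0 ->
  eterm (l - k) u v + eterm (k + l + 1) a2 a5 = c - 1 -> 0 < a2.
Proof.
  intros Hc0 Hc2 Hlk Hor Ha5 Hden H.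
  unfold eterm in H.
  destruct (Z.eq_dec (k + l + 1) 0) as [e|_]; [lia|].
  assert (Hl : 0 <= IZR l) by (apply IZR_le; lia).
  assert (Hk : IZR l <= IZR k) by (apply IZR_le; lia).
  rewrite !plus_IZR in H. rewrite minus_IZR in H.
  set (t := (a2 - a5) / (a2 + a5)) in *.
  assert (Htd : t * (a2 + a5) = a2 - a5) by (unfold t; field; auto).
  assert (Ht : -1 < t < 1).
  { destruct (Z.eq_dec (l - k) 0) as [e|ne].
    - assert (IZR k + IZR l + 1 >= 1) by lra.
      split; nra.
    - destruct Hor as [->|[Hu Hv]]; [lia|].
      set (s := (u - v) / (u + v)) in *.
      assert (Hsd : s * (u + v) = u - v) by (unfold s; field; lra).
      assert (Hs : -1 < s < 1) by (split; nra).
      assert ((IZR l - IZR k) * s >= IZR l - IZR k) by nra.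
      assert ((IZR l - IZR k) * s <= IZR k - IZR l) by nra.
      split; nra. }
  destruct (Rle_lt_dec a2 0) as [Hle|]; [|lra].
  exfalso.
  destruct (Rlt_le_dec 0 (a2 + a5)) as [Hp|Hn].
  - nra.
  - assert (a2 + a5 < 0) by lra. nra.
Qed.

Section S.
Variables (c : R) (r : radius).
Hypotheses (Hc0 : 0 < c) (Hc2 : c < 2).

Lemma famA :
  (forall K L : Z, (0 <= K)%Z -> (0 <= L <= K)%Z -> EIII c r K L (- K - 1)%Z) ->
  (forall n : Z, (0 <= n)%Z -> 0 < r n 0%Z (- n)%Z) ->
  forall l k : nat, (l <= k)%nat ->
    0 < r (Z.of_nat k) (Z.of_nat l) (- Z.of_nat k)%Z.
Proof.
  intros HE Hb.
  assert (St : forall K L : Z, (0 <= L <= K)%Z ->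
            (K = L \/ 0 < r K (L + 1)%Z (- K)%Z) ->
            0 < r (K + 1)%Z L (- (K + 1))%Z -> 0 < r K L (- K)%Z ->
            0 < r (K + 1)%Z (L + 1)%Z (- (K + 1))%Z).
  { intros K L HKL Hor H1 H5.
    destruct (HE K L ltac:(lia) HKL) as [D1 [D2 [D3 Eq]]].
    cbv zeta in D3, Eq.
    replace (- K - 1 + 1)%Z with (- K)%Z in *by ring.
    replace (- (K + 1))%Z with (- K - 1)%Z by ring.
    replace (- (K + 1))%Z with (- K - 1)%Z in H1 by ring.
    replace (L + (- K - 1) + 1)%Z with (L - K)%Z in Eq by ring.
    replace (- K - 1 + K + 1)%Z with 0%Z in Eq by ring.
    replace (K + L + 1)%Z with (K + L + 1)%Z in Eq by ring.
    unfold eterm at 2 in Eq. destruct (Z.eq_dec 0 0) as [_|n]; [|congruence].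
    rewrite Rplus_0_r in Eq.
    refine (step c _ _ _ _ K L Hc0 Hc2 HKL _ H5 _ Eq).
    - destruct Hor as [->|Hp]; [now left|right; split; auto].
    - apply D3. lia. }
  induction l as [|l IHl]; intros k Hk.
  - apply Hb. lia.
  - destruct k as [|k]; [lia|].
    assert (Hk' : (l <= k)%nat) by lia.
    clear Hk. induction Hk' as [|k Hk IHk].
    + rewrite Nat2Z.inj_succ. unfold Z.succ.
      apply St; [lia| left; reflexivity | |].
      * replace (Z.of_nat l + 1)%Z with (Z.of_nat (S l)) by lia. apply IHl. lia.
      * apply IHl. lia.
    + rewrite (Nat2Z.inj_succ (S k)), (Nat2Z.inj_succ l). unfold Z.succ.
      apply St; [lia| right | |].
      * replace (Z.of_nat l + 1)%Z with (Z.of_nat (S l)) by lia. exact IHk.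
      * replace (Z.of_nat (S k) + 1)%Z with (Z.of_nat (S (S k))) by lia. apply IHl. lia.
      * apply IHl. lia.
Qed.

Lemma famB :
  (forall K L : Z, (0 <= L)%Z -> (0 <= K <= L)%Z -> EIII c r K L (- L - 1)%Z) ->
  (forall n : Z, (0 <= n)%Z -> 0 < r 0%Z n (- n)%Z) ->
  forall k l : nat, (k <= l)%nat ->
    0 < r (Z.of_nat k) (Z.of_nat l) (- Z.of_nat l)%Z.
Proof.
  intros HE Hb.
  assert (St : forall K L : Z, (0 <= K <= L)%Z ->
            (K = L \/ 0 < r (K + 1)%Z L (- L)%Z) ->
            0 < r K (L + 1)%Z (- (L + 1))%Z -> 0 < r K L (- L)%Z ->
            0 < r (K + 1)%Z (L + 1)%Z (- (L + 1))%Z).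
  { intros K L HKL Hor H1 H5.
    destruct (HE K L ltac:(lia) HKL) as [D1 [D2 [D3 Eq]]].
    cbv zeta in D3, Eq.
    replace (- L - 1 + 1)%Z with (- L)%Z in *by ring.
    replace (- (L + 1))%Z with (- L - 1)%Z by ring.
    replace (- (L + 1))%Z with (- L - 1)%Z in H1 by ring.
    replace (L + (- L - 1) + 1)%Z with 0%Z in Eq by ring.
    replace (- L - 1 + K + 1)%Z with (K - L)%Z in Eq by ring.
    replace (K + L + 1)%Z with (L + K + 1)%Z in Eq, D3 by ring.
    unfold eterm at 1 in Eq. destruct (Z.eq_dec 0 0) as [_|n]; [|congruence].
    rewrite Rplus_0_l in Eq.
    refine (step c _ _ _ _ L K Hc0 Hc2 HKL _ H5 _ Eq).
    - destruct Hor as [->|Hp]; [now left|right; split; auto].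
    - apply D3. lia. }
  induction k as [|k IHk]; intros l Hl.
  - apply Hb. lia.
  - destruct l as [|l]; [lia|].
    assert (Hl' : (k <= l)%nat) by lia.
    clear Hl. induction Hl' as [|l Hl IHl].
    + rewrite Nat2Z.inj_succ. unfold Z.succ.
      apply St; [lia| left; reflexivity | |].
      * replace (Z.of_nat k + 1)%Z with (Z.of_nat (S k)) by lia. apply IHk. lia.
      * apply IHk. lia.
    + rewrite (Nat2Z.inj_succ (S l)), (Nat2Z.inj_succ k). unfold Z.succ.
      apply St; [lia| right | |].
      * replace (Z.of_nat k + 1)%Z with (Z.of_nat (S k)) by lia. exact IHl.
      * replace (Z.of_nat (S l) + 1)%Z with (Z.of_nat (S (S l))) by lia. apply IHk. lia.
      * apply IHk. lia.
Qed.
End S.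

Theorem lemma4 (c : R) (r : radius) :
  0 < c -> c < 2 ->
  (forall K L : Z, (0 <= K)%Z -> (0 <= L <= K)%Z -> EIII c r K L (- K - 1)%Z) ->
  (forall K L : Z, (0 <= L)%Z -> (0 <= K <= L)%Z -> EIII c r K L (- L - 1)%Z) ->
  (forall n : Z, (0 <= n)%Z -> 0 < r n 0%Z (- n)%Z) ->
  (forall n : Z, (0 <= n)%Z -> 0 < r 0%Z n (- n)%Z) ->
  (forall K L : Z, (0 <= L <= K)%Z -> 0 < r K L (- K)%Z) /\
  (forall K L : Z, (0 <= K <= L)%Z -> 0 < r K L (- L)%Z).
Proof.
  intros Hc0 Hc2 HA HB hA hB. split; intros K L HKL.
  - pose proof (famA c r Hc0 Hc2 HA hA (Z.to_nat L) (Z.to_nat K) ltac:(lia)) as H.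
    rewrite !Z2Nat.id in H by lia. exact H.
  - pose proof (famB c r Hc0 Hc2 HB hB (Z.to_nat K) (Z.to_nat L) ltac:(lia)) as H.
    rewrite !Z2Nat.id in H by lia. exact H.
Qed.
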